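(* Let $U$ be a commutative supertropical semiring, $M:=eU$, $\gamma:M\to N$ a surjective homomorphism onto a bipotent semiring $N$, $V:=U/F(U,\gamma)$, and $\alpha:=\sigma_V\circ\pi_{F(U,\gamma)}:U\to\hat V$ (the initial transmission from $U$ to a supertropical semiring covering $\gamma$). Then for $x_1,x_2\in U$ we have $\alpha(x_1)=\alpha(x_2)$ if and only if either $x_1=x_2$, or $x_1,x_2\in D(U,\gamma)$ and $\gamma(ex_1)=\gamma(ex_2)$, or $\gamma(ex_1)=\gamma(ex_2)=0$.
   Context: All monoids are commutative. A supertropical monoid is a monoid $(U,\cdot)$ with absorbing element $0$ and distinguished idempotent $e$ with $ex=0\Rightarrow x=0$, together with a total ordering on $M:=eU$, compatible with multiplication and with $0$ least, making $M$ a bipotent semiring (addition $=\max$). A supertropical semiring is a supertropical monoid for which the addition $x+y:=y$ if $ex<ey$, $x$ if $ex>ey$, $ex$ if $ex=ey$ is associative and distributive. For a TE-relation $E$, $U/E$ carries the unique supertropical monoid structure making $\pi_E$ a transmission (multiplicative map preserving $0,1,e$ and order on ghosts). $F(U,\gamma)$: $x\sim y$ iff $x=y$, or $x,y\in M$ with $\gamma(x)=\gamma(y)$, or $\gamma(ex)=\gamma(ey)=0$; ghost ideal of $U/F(U,\gamma)$ identified with $N$. For a supertropical monoid $V$ with ghost ideal $N$: $D(V):=N\cup\{yz: y,z\in V,\ \exists y'\in N,\ y'<ey,\ y'z=eyz\}$; $\hat V:=V/E(V,D(V))$ where $x\sim y$ iff $x=y$ or ($x,y\in D(V)$, $ex=ey$);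 $\sigma_V$ the projection. A $\gamma$-NC-product in $U$ is an element $x=yz$ with $y,z\in U$ such that some $y'\in M$ satisfies $\gamma(y')<\gamma(ey)$ and $\gamma(y'z)=\gamma(eyz)$; $D(U,\gamma):=M\cup\{\gamma\text{-NC-products}\}$. *)

(* Defs.v *)
From Stdlib Require Import ClassicalEpsilon.

Set Implicit Arguments.

(** A supertropical monoid: multiplication, 1, 0, distinguished idempotent e,
    and an order relation [sle] on the ghost ideal M = eU. *)
Record stmonoid := STM {
  car :> Type;
  smul : car -> car -> car;
  sone : car;
  szero : car;
  se : car;
  sle : car -> car -> Prop }.

Definition ghost (U : stmonoid) (x : U) : Prop := smul U (se U) x = x.
Definition slt (U : stmonoid) (a b : U) : Prop := sle U a b /\ a <> b.

Definition is_stmonoid (U : stmonoid) : Prop :=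
  (forall x y z : U, smul U x (smul U y z) = smul U (smul U x y) z) /\
  (forall x y : U, smul U x y = smul U y x) /\
  (forall x : U, smul U (sone U) x = x) /\
  (forall x : U, smul U (szero U) x = szero U) /\
  smul U (se U) (se U) = se U /\
  (forall x : U, smul U (se U) x = szero U -> x = szero U) /\
  (forall x y : U, sle U x y -> ghost U x /\ ghost U y) /\
  (forall x : U, ghost U x -> sle U x x) /\
  (forall x y : U, sle U x y -> sle U y x -> x = y) /\
  (forall x y z : U, sle U x y -> sle U y z -> sle U x z) /\
  (forall x y : U, ghost U x -> ghost U y -> sle U x y \/ sle U y x) /\
  (forall x y z : U, ghost U z -> sle U x y -> sle U (smul U x z) (smul U y z)) /\
  (forall x : U, ghost U x -> sle U (szero U) x).

Definition sadd (U : stmonoid) (x y : U) : U :=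
  let ex := smul U (se U) x in
  let ey := smul U (se U) y in
  match excluded_middle_informative (slt U ex ey) with
  | left _ => y
  | right _ =>
      match excluded_middle_informative (slt U ey ex) with
      | left _ => x
      | right _ => ex
      end
  end.

Definition is_stsemiring (U : stmonoid) : Prop :=
  is_stmonoid U /\
  (forall x y z : U, sadd U x (sadd U y z) = sadd U (sadd U x y) z) /\
  (forall x y z : U, smul U x (sadd U y z) = sadd U (smul U x y) (smul U x z)).

Record bsemiring := BS {
  bcar :> Type;
  badd : bcar -> bcar -> bcar;
  bmul : bcar -> bcar -> bcar;
  bzero : bcar;
  bone : bcar }.

Definition is_bipotent_semiring (N : bsemiring) : Prop :=
  (forall a b c : N, badd N a (badd N b c) = badd N (badd N a b) c) /\
  (forall a b : N, badd N a b = badd N b a) /\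
  (forall a : N, badd N (bzero N) a = a) /\
  (forall a b c : N, bmul N a (bmul N b c) = bmul N (bmul N a b) c) /\
  (forall a b : N, bmul N a b = bmul N b a) /\
  (forall a : N, bmul N (bone N) a = a) /\
  (forall a : N, bmul N (bzero N) a = bzero N) /\
  (forall a b c : N, bmul N a (badd N b c) = badd N (bmul N a b) (bmul N a c)) /\
  (forall a b : N, badd N a b = a \/ badd N a b = b).

Definition ble (N : bsemiring) (a b : N) : Prop := badd N a b = b.
Definition blt (N : bsemiring) (a b : N) : Prop := ble N a b /\ a <> b.

(** gamma : M -> N semiring homomorphism (given as a function on U, only its
    values on M = eU matter) *)
Definition is_hom_M {U : stmonoid} {N : bsemiring} (g : U -> N) : Prop :=
  (forall x y : U, ghost U x -> ghost U y -> g (smul U x y) = bmul N (g x) (g y)) /\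
  (forall x y : U, ghost U x -> ghost U y -> g (sadd U x y) = badd N (g x) (g y)) /\
  g (szero U) = bzero N /\
  g (se U) = bone N.

Definition surj_M {U : stmonoid} {N : bsemiring} (g : U -> N) : Prop :=
  forall n : N, exists x : U, ghost U x /\ g x = n.

(** Quotient of a supertropical monoid by an (TE-)equivalence E: carrier is the
    set of E-classes; operations via representatives; order on ghosts induced. *)
Definition qcar {U : stmonoid} (E : U -> U -> Prop) : Type :=
  {P : U -> Prop | exists x, P = E x}.
Definition qproj {U : stmonoid} (E : U -> U -> Prop) (x : U) : qcar E :=
  exist _ (E x) (ex_intro _ x eq_refl).
Definition qrep {U : stmonoid} (E : U -> U -> Prop) (c : qcar E) : U :=
  proj1_sig (constructive_indefinite_description _ (proj2_sig c)).
Definition quotient {U : stmonoid} (E : U -> U -> Prop) : stmonoid :=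
  @STM (qcar E)
    (fun c d => qproj E (smul U (qrep c) (qrep d)))
    (qproj E (sone U)) (qproj E (szero U)) (qproj E (se U))
    (fun c d => exists a b : U, ghost U a /\ ghost U b /\ sle U a b /\
                  qproj E a = c /\ qproj E b = d).

Definition Frel {U : stmonoid} {N : bsemiring} (g : U -> N) (x y : U) : Prop :=
  x = y \/ (ghost U x /\ ghost U y /\ g x = g y) \/
  (g (smul U (se U) x) = bzero N /\ g (smul U (se U) y) = bzero N).

Definition DV (V : stmonoid) (x : V) : Prop :=
  ghost V x \/
  exists y z : V, x = smul V y z /\
    exists y' : V, ghost V y' /\ slt V y' (smul V (se V) y) /\
      smul V y' z = smul V (se V) (smul V y z).

Definition ErelD {V : stmonoid} (D : V -> Prop) (x y : V) : Prop :=
  x = y \/ (D x /\ D y /\ smul V (se V) x = smul V (se V) y).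

Definition hat (V : stmonoid) : stmonoid := quotient (ErelD (DV V)).
Definition sigmaV (V : stmonoid) (x : V) : hat V := qproj (ErelD (DV V)) x.

Definition Vof {U : stmonoid} {N : bsemiring} (g : U -> N) : stmonoid :=
  quotient (Frel g).
Definition alpha {U : stmonoid} {N : bsemiring} (g : U -> N) (x : U)
  : hat (Vof g) :=
  sigmaV (Vof g) (qproj (Frel g) x).

Definition NCprod {U : stmonoid} {N : bsemiring} (g : U -> N) (x : U) : Prop :=
  exists y z : U, x = smul U y z /\
    exists y' : U, ghost U y' /\ blt N (g y') (g (smul U (se U) y)) /\
      g (smul U y' z) = g (smul U (se U) (smul U y z)).
Definition DUg {U : stmonoid} {N : bsemiring} (g : U -> N) (x : U) : Prop :=
  ghost U x \/ NCprod g x.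

(* Main.v *)
Require Import Defs.
From Stdlib Require Import ClassicalEpsilon FunctionalExtensionality PropExtensionality Classical.

Lemma sig_ext (A : Type) (P : A -> Prop) (x y : A) (p : P x) (q : P y) :
  x = y -> exist P x p = exist P y q.
Proof. intros ->. f_equal. apply proof_irrelevance. Qed.

Lemma qproj_eq {U : stmonoid} (E : U -> U -> Prop)
  (Hr : forall x, E x x) (Hs : forall x y, E x y -> E y x)
  (Ht : forall x y z, E x y -> E y z -> E x z) (a b : U) :
  qproj E a = qproj E b <-> E a b.
Proof.
  split.
  - intro H. assert (H1 : E a = E b) by exact (f_equal (@proj1_sig _ _) H).
    rewrite H1. apply Hr.
  - intro H. unfold qproj. apply sig_ext.
    apply functional_extensionality; intro y; apply propositional_extensionality;
    split; intro; eauto.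
Qed.

Lemma qproj_rep {U : stmonoid} (E : U -> U -> Prop) (c : qcar E) :
  qproj E (qrep c) = c.
Proof.
  destruct c as [P p]. unfold qproj, qrep. apply sig_ext. simpl.
  destruct (constructive_indefinite_description _ p) as [x Hx]. simpl.
  symmetry. exact Hx.
Qed.

Lemma qcar_surj {U : stmonoid} (E : U -> U -> Prop) (c : qcar E) :
  exists y, c = qproj E y.
Proof. exists (qrep c). symmetry. apply qproj_rep. Qed.

Lemma Frel_refl {U : stmonoid} {N : bsemiring} (g : U -> N) x : Frel g x x.
Proof. left; reflexivity. Qed.

Lemma Frel_sym {U : stmonoid} {N : bsemiring} (g : U -> N) x y :
  Frel g x y -> Frel g y x.
Proof.
  unfold Frel; intros [H|[[H1 [H2 H3]]|[H1 H2]]].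
  - left; auto.
  - right; left; auto.
  - right; right; auto.
Qed.

Lemma Frel_trans {U : stmonoid} {N : bsemiring} (g : U -> N) x y z :
  Frel g x y -> Frel g y z -> Frel g x z.
Proof.
  unfold Frel, ghost. intros H1 H2.
  destruct H1 as [H1|[[Hx [Hy Hxy]]|[Hx Hy]]];
  destruct H2 as [H2|[[Hy' [Hz Hyz]]|[Hy' Hz]]];
  first [ left; congruence
        | right; left; repeat split; congruence
        | right; right; split; congruence ].
Qed.

Lemma ErelD_refl {V : stmonoid} (D : V -> Prop) x : ErelD D x x.
Proof. left; reflexivity. Qed.

Lemma ErelD_sym {V : stmonoid} (D : V -> Prop) x y : ErelD D x y -> ErelD D y x.
Proof.
  intros [H|[H1 [H2 H3]]]; [left; auto | right; auto].
Qed.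

Lemma ErelD_trans {V : stmonoid} (D : V -> Prop) x y z :
  ErelD D x y -> ErelD D y z -> ErelD D x z.
Proof.
  intros [->|[H1 [H2 H3]]] [<-|[H4 [H5 H6]]].
  - left; reflexivity.
  - right; auto.
  - right; auto.
  - right; repeat split; auto. congruence.
Qed.

Lemma qeqF {U : stmonoid} {N : bsemiring} (g : U -> N) a b :
  qproj (Frel g) a = qproj (Frel g) b <-> Frel g a b.
Proof.
  apply qproj_eq; [apply Frel_refl | apply Frel_sym | apply Frel_trans].
Qed.

Lemma ghost_e {U : stmonoid} (HM : is_stmonoid U) x : ghost U (smul U (se U) x).
Proof.
  destruct HM as (Hassoc & Hcomm & Hone & Hzero & Hee & _).
  unfold ghost. rewrite Hassoc, Hee. reflexivity.
Qed.

Lemma ghost_mul_l {U : stmonoid} (HM : is_stmonoid U) a b :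
  ghost U a -> ghost U (smul U a b).
Proof.
  destruct HM as (Hassoc & Hcomm & Hone & Hzero & Hee & _).
  unfold ghost. intro Ha. rewrite Hassoc, Ha. reflexivity.
Qed.

Lemma mul_eb {U : stmonoid} (HM : is_stmonoid U) a b :
  ghost U a -> smul U a b = smul U a (smul U (se U) b).
Proof.
  destruct HM as (Hassoc & Hcomm & Hone & Hzero & Hee & _).
  unfold ghost. intro Ha. rewrite Hassoc. rewrite (Hcomm a (se U)). rewrite Ha.
  reflexivity.
Qed.

Lemma g_e_mul {U : stmonoid} {N : bsemiring} (g : U -> N)
  (HM : is_stmonoid U) (Hg : is_hom_M g) a b :
  g (smul U (se U) (smul U a b)) =
  bmul N (g (smul U (se U) a)) (g (smul U (se U) b)).
Proof.
  assert (HM' := HM).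
  destruct HM' as (Hassoc & _).
  destruct Hg as (gmul & _).
  rewrite (Hassoc (se U) a b).
  rewrite (mul_eb HM (smul U (se U) a) b (ghost_e HM a)).
  apply gmul; apply ghost_e; auto.
Qed.

Lemma Frel_mul_l {U : stmonoid} {N : bsemiring} (g : U -> N)
  (HM : is_stmonoid U) (HN : is_bipotent_semiring N) (Hg : is_hom_M g) a a' b :
  Frel g a a' -> Frel g (smul U a b) (smul U a' b).
Proof.
  intros [->|[[Ha [Ha' Haa]]|[Ha Ha']]].
  - left; reflexivity.
  - right; left. split; [apply ghost_mul_l; auto | split; [apply ghost_mul_l; auto|]].
    assert (Hg' := Hg). destruct Hg' as (gmul & _).
    rewrite (mul_eb HM a b Ha), (mul_eb HM a' b Ha').
    rewrite (gmul a _ Ha (ghost_e HM b)), (gmul a' _ Ha' (ghost_e HM b)), Haa.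
    reflexivity.
  - right; right.
    destruct HN as (_ & _ & _ & _ & _ & _ & Nmul0 & _).
    rewrite !(g_e_mul g HM Hg), Ha, Ha'. split; apply Nmul0.
Qed.

Lemma Frel_mul {U : stmonoid} {N : bsemiring} (g : U -> N)
  (HM : is_stmonoid U) (HN : is_bipotent_semiring N) (Hg : is_hom_M g) a a' b b' :
  Frel g a a' -> Frel g b b' -> Frel g (smul U a b) (smul U a' b').
Proof.
  intros H1 H2. apply Frel_trans with (smul U a' b).
  - apply Frel_mul_l; auto.
  - assert (HM' := HM). destruct HM' as (_ & Hcomm & _).
    rewrite (Hcomm a' b), (Hcomm a' b'). apply Frel_mul_l; auto.
Qed.

Lemma smulV {U : stmonoid} {N : bsemiring} (g : U -> N)
  (HM : is_stmonoid U) (HN : is_bipotent_semiring N) (Hg : is_hom_M g) a b :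
  smul (Vof g) (qproj (Frel g) a) (qproj (Frel g) b) = qproj (Frel g) (smul U a b).
Proof.
  change (qproj (Frel g) (smul U (qrep (qproj (Frel g) a))
     (qrep (qproj (Frel g) b))) = qproj (Frel g) (smul U a b)).
  apply qeqF. apply Frel_mul; auto; apply qeqF; apply qproj_rep.
Qed.

Lemma smulV_e {U : stmonoid} {N : bsemiring} (g : U -> N)
  (HM : is_stmonoid U) (HN : is_bipotent_semiring N) (Hg : is_hom_M g) b :
  smul (Vof g) (se (Vof g)) (qproj (Frel g) b) = qproj (Frel g) (smul U (se U) b).
Proof. apply smulV; auto. Qed.

Lemma ghostV {U : stmonoid} {N : bsemiring} (g : U -> N)
  (HM : is_stmonoid U) (HN : is_bipotent_semiring N) (Hg : is_hom_M g) x :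
  ghost (Vof g) (qproj (Frel g) x) <-> Frel g (smul U (se U) x) x.
Proof.
  unfold ghost. rewrite (smulV_e g HM HN Hg). apply qeqF.
Qed.

Lemma Fghost {U : stmonoid} {N : bsemiring} (g : U -> N) a b :
  ghost U a -> ghost U b -> (Frel g a b <-> g a = g b).
Proof.
  intros Ha Hb; split.
  - intros [->|[[_ [_ H]]|[H1 H2]]]; auto.
    unfold ghost in Ha, Hb. rewrite Ha in H1. rewrite Hb in H2. congruence.
  - intro H; right; left; auto.
Qed.

Lemma sle_ble {U : stmonoid} {N : bsemiring} (g : U -> N)
  (HM : is_stmonoid U) (Hg : is_hom_M g) a b :
  sle U a b -> ble N (g a) (g b).
Proof.
  destruct HM as (Hassoc & Hcomm & Hone & Hzero & Hee & Hez & Hleg & Hlerefl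
    & Hantisym & Htrans & Htot & Hlemul & Hle0).
  destruct Hg as (gmul & gadd & g0 & ge).
  intro Hab. destruct (Hleg _ _ Hab) as [Ha Hb].
  assert (Hs : sadd U a b = b).
  { unfold sadd. cbv zeta. assert (Ha' := Ha). assert (Hb' := Hb).
    unfold ghost in Ha', Hb'. rewrite Ha', Hb'.
    destruct (excluded_middle_informative (slt U a b)) as [_|Hn1]; [reflexivity|].
    destruct (excluded_middle_informative (slt U b a)) as [[Hba Hne]|Hn2].
    - exfalso. apply Hne. apply Hantisym; assumption.
    - destruct (classic (a = b)) as [E|Hne]; [exact E|].
      exfalso; apply Hn1; split; assumption. }
  unfold ble. rewrite <- (gadd a b Ha Hb), Hs. reflexivity.
Qed.

Lemma ble_antisym {N : bsemiring} (HN : is_bipotent_semiring N) a b :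
  ble N a b -> ble N b a -> a = b.
Proof.
  destruct HN as (_ & Nadd_comm & _).
  unfold ble. intros H1 H2. rewrite Nadd_comm in H2. congruence.
Qed.

Lemma DV_to_DUg {U : stmonoid} {N : bsemiring} (g : U -> N)
  (HM : is_stmonoid U) (HN : is_bipotent_semiring N) (Hg : is_hom_M g) x :
  g (smul U (se U) x) <> bzero N -> DV (Vof g) (qproj (Frel g) x) -> DUg g x.
Proof.
  intros Hnz [Hgh | [c [d [Hx [c' [Hc' [Hlt Heq]]]]]]].
  - apply (ghostV g HM HN Hg) in Hgh.
    destruct Hgh as [H|[[H1 [H2 H3]]|[H1 H2]]].
    + left. exact H.
    + left. exact H2.
    + exfalso; apply Hnz; exact H2.
  - destruct (qcar_surj _ c) as [y ->]. destruct (qcar_surj _ d) as [z ->].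
    destruct (qcar_surj _ c') as [w ->].
    rewrite (smulV g HM HN Hg) in Hx. apply qeqF in Hx.
    destruct Hx as [Hx|[[H1 [H2 H3]]|[H1 H2]]];
      [| left; exact H1 | exfalso; apply Hnz; exact H1].
    subst x. right. exists y, z. split; [reflexivity|].
    apply (ghostV g HM HN Hg) in Hc'. apply qeqF in Hc'.
    exists (smul U (se U) w). split; [apply ghost_e; auto|].
    rewrite <- Hc' in Hlt, Heq.
    rewrite (smulV_e g HM HN Hg) in Hlt.
    rewrite !(smulV g HM HN Hg) in Heq. try rewrite (smulV_e g HM HN Hg) in Heq.
    apply qeqF in Heq.
    apply Fghost in Heq; [| apply ghost_mul_l; auto; apply ghost_e; auto
                          | apply ghost_e; auto].
    split; [|exact Heq].
    destruct Hlt as [[a [b [Ha [Hb [Hab [Ea Eb]]]]]] Hne].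
    apply qeqF in Ea, Eb.
    apply Fghost in Ea; [|exact Ha|apply ghost_e; auto].
    apply Fghost in Eb; [|exact Hb|apply ghost_e; auto].
    split.
    + rewrite <- Ea, <- Eb. apply sle_ble; auto.
    + intro Hge. apply Hne. apply qeqF. apply Fghost; try apply ghost_e; auto.
Qed.

Lemma DUg_to_DV {U : stmonoid} {N : bsemiring} (g : U -> N)
  (HM : is_stmonoid U) (HN : is_bipotent_semiring N) (Hg : is_hom_M g) x :
  DUg g x -> DV (Vof g) (qproj (Frel g) x).
Proof.
  assert (HM' := HM).
  destruct HM' as (Hassoc & Hcomm & Hone & Hzero & Hee & Hez & Hleg & Hlerefl
    & Hantisym & Htrans & Htot & Hlemul & Hle0).
  intros [Hx | [y [z [-> [y' [Hy' [Hlt Heq]]]]]]].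
  - left. apply (ghostV g HM HN Hg). unfold ghost in Hx. rewrite Hx. apply Frel_refl.
  - right. exists (qproj (Frel g) y), (qproj (Frel g) z).
    split; [symmetry; apply smulV; auto|].
    exists (qproj (Frel g) y'). split.
    { apply (ghostV g HM HN Hg). assert (Hy'' := Hy'). unfold ghost in Hy''.
      rewrite Hy''; apply Frel_refl. }
    split.
    + rewrite (smulV_e g HM HN Hg). split.
      * destruct (Htot y' (smul U (se U) y) Hy' (ghost_e HM y)) as [H|H].
        -- exists y', (smul U (se U) y). repeat split; auto. apply ghost_e; auto.
        -- exfalso. destruct Hlt as [Hle Hne]. apply Hne. apply (ble_antisym HN); auto.
           apply sle_ble; auto.
      * intro E. apply qeqF in E. apply Fghost in E; [|auto|apply ghost_e; auto].
        destruct Hlt as [_ Hne]; auto.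
    + rewrite !(smulV g HM HN Hg). try rewrite (smulV_e g HM HN Hg).
      apply qeqF. apply Fghost; [apply ghost_mul_l; auto | apply ghost_e; auto |].
      exact Heq.
Qed.

Theorem corollary4p10 (U : stmonoid) (HU : is_stsemiring U)
  (N : bsemiring) (HN : is_bipotent_semiring N)
  (g : U -> N) (Hg : is_hom_M g) (Hsurj : surj_M g) (x1 x2 : U) :
  alpha g x1 = alpha g x2 <->
  (x1 = x2 \/
   (DUg g x1 /\ DUg g x2 /\ g (smul U (se U) x1) = g (smul U (se U) x2)) \/
   (g (smul U (se U) x1) = bzero N /\ g (smul U (se U) x2) = bzero N)).
Proof.
  assert (HM := proj1 HU).
  pose proof (qproj_eq (ErelD (DV (Vof g))) (ErelD_refl _) (@ErelD_sym _ _)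
    (@ErelD_trans _ _) (qproj (Frel g) x1) (qproj (Frel g) x2)) as Hq.
  split.
  - intro H. apply Hq in H. destruct H as [H|[D1 [D2 He]]].
    + apply qeqF in H. destruct H as [H|[[H1 [H2 H3]]|H]].
      * left; exact H.
      * right; left. split; [left; exact H1|split; [left; exact H2|]].
        unfold ghost in H1, H2. rewrite H1, H2. exact H3.
      * right; right; exact H.
    + rewrite !(smulV_e g HM HN Hg) in He. apply qeqF in He.
      apply Fghost in He; try apply ghost_e; auto.
      destruct (classic (g (smul U (se U) x1) = bzero N)) as [Z|NZ].
      * right; right. split; congruence.
      * right; left. split; [apply (DV_to_DUg g HM HN Hg); auto|].
        split; [apply (DV_to_DUg g HM HN Hg); auto; congruence | exact He].
  - intros [->|[[D1 [D2 He]]|Z]].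
    + reflexivity.
    + apply Hq. right. split; [apply DUg_to_DV; auto|split;[apply DUg_to_DV; auto|]].
      rewrite !(smulV_e g HM HN Hg). apply qeqF. apply Fghost; try apply ghost_e; auto.
    + apply Hq. left. apply qeqF. right; right; exact Z.
Qed.
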